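(* Let $X_1,X_2$ be independent real-valued random variables with probability density functions $f_1,f_2$, let $\phi\ge0$ be a weight function on $\mathbb{R}$, and set $X=X_1+X_2$. Define \[ \kappa=\exp\Big(\frac{2h^{\rm w}_\phi(X_1)}{\mathbb{E}\phi(X_1)}\Big)+\exp\Big(\frac{2h^{\rm w}_\phi(X_2)}{\mathbb{E}\phi(X_2)}\Big),\qquad \alpha=\tan^{-1}\Big[\exp\Big(\frac{h^{\rm w}_\phi(X_2)}{\mathbb{E}\phi(X_2)}-\frac{h^{\rm w}_\phi(X_1)}{\mathbb{E}\phi(X_1)}\Big)\Big], \] $Y_1=X_1/\cos\alpha$, $Y_2=X_2/\sin\alpha$, $\phi_c(x)=\phi(x\cos\alpha)$, $\phi_s(x)=\phi(x\sin\alpha)$, and $h^{\rm w}_{\phi_c}(Y_1)=-\mathbb{E}[\phi_c(Y_1)\log f_{Y_1}(Y_1)]$, $h^{\rm w}_{\phi_s}(Y_2)=-\mathbb{E}[\phi_s(Y_2)\log f_{Y_2}(Y_2)]$, where $f_{Y_i}$ is the density of $Y_i$. Assume: (i) if $\kappa\ge1$ then $\mathbb{E}\phi(X_i)\ge\mathbb{E}\phi(X)$ for $i=1,2$, and if $\kappa\le1$ then $\mathbb{E}\phi(X_i)\le\mathbb{E}\phi(X)$ for $i=1,2$; (ii) (weighted Lieb splitting inequality) $(\cos\alpha)^2h^{\rm w}_{\phi_c}(Y_1)+(\sin\alpha)^2h^{\rm w}_{\phi_s}(Y_2)\le h^{\rm w}_\phi(X)$. Then the weighted entropy power inequality holds: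 \[ \exp\Big(\frac{2h^{\rm w}_\phi(X_1)}{\mathbb{E}\phi(X_1)}\Big)+\exp\Big(\frac{2h^{\rm w}_\phi(X_2)}{\mathbb{E}\phi(X_2)}\Big)\le\exp\Big(\frac{2h^{\rm w}_\phi(X)}{\mathbb{E}\phi(X)}\Big). \]
   Context: For a real random variable $Z$ with density $f_Z$ and a nonnegative weight function $\phi$, the weighted differential entropy is $h^{\rm w}_\phi(Z)=-\mathbb{E}[\phi(Z)\log f_Z(Z)]=-\int\phi(x)f_Z(x)\log f_Z(x)\,dx$; $\log$ is the natural logarithm. All integrals are assumed to converge absolutely, and $\phi>0$ on an open set. *)

(* Defs.v *)
From mathcomp Require Import all_boot all_order all_algebra.
From mathcomp Require Import all_classical all_reals all_analysis.
Set Implicit Arguments. Unset Strict Implicit. Unset Printing Implicit Defensive.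
Import Order.TTheory GRing.Theory Num.Theory.
Import numFieldNormedType.Exports.
Local Open Scope classical_set_scope.
Local Open Scope ring_scope.

Definition indep2 {d} {T : measurableType d} {R : realType}
  (P : probability T R) (X1 X2 : T -> R) : Prop :=
  forall A B : set R, measurable A -> measurable B ->
    P (X1 @^-1` A `&` X2 @^-1` B) = (P (X1 @^-1` A) * P (X2 @^-1` B))%E.

Definition is_density {d} {T : measurableType d} {R : realType}
  (P : probability T R) (Z : T -> R) (f : R -> R) : Prop :=
  measurable_fun setT f /\ (forall x, 0 <= f x) /\
  forall A : set R, measurable A ->
    P (Z @^-1` A) = (\int[lebesgue_measure]_(x in A) (f x)%:E)%E.

Definition wexp {d} {T : measurableType d} {R : realType}
  (P : probability T R) (phi : R -> R) (Z : T -> R) : R :=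
  fine 'E_P[phi \o Z].

Definition went {d} {T : measurableType d} {R : realType}
  (P : probability T R) (phi : R -> R) (Z : T -> R) (f : R -> R) : R :=
  - fine 'E_P[fun w => phi (Z w) * ln (f (Z w))].

Definition wadmissible {d} {T : measurableType d} {R : realType}
  (P : probability T R) (phi : R -> R) (Z : T -> R) (f : R -> R) : Prop :=
  P.-integrable setT (EFin \o (phi \o Z)) /\
  P.-integrable setT (EFin \o (fun w => phi (Z w) * ln (f (Z w)))).

(* Main.v *)
Require Import Defs.
From HB Require Import structures.
From mathcomp Require Import all_boot all_order all_algebra.
From mathcomp Require Import all_classical all_reals all_analysis.
From mathcomp Require Import measurable_realfun.
From mathcomp Require Import ring lra.
Import Order.TTheory GRing.Theory Num.Theory.
Import numFieldNormedType.Exports.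
Local Open Scope classical_set_scope.
Local Open Scope ring_scope.

Section S.
Variable R : realType.

Definition mulc (c : R) : measurableTypeR R -> measurableTypeR R := fun x : R => x * c.
Lemma mulc_measurable (c : R) : measurable_fun setT (mulc c).
Proof. by apply: measurable_funM => //; exact: measurable_cst. Qed.

Lemma leb_scale (c : R) (c0 : 0 < c) (A : set R) : measurable A ->
  lebesgue_measure A = (c%:E * lebesgue_measure (mulc c @^-1` A))%E.
Proof.
move=> mA.
pose pf := measure_function_pushforward__canonical__measure_function_Measure lebesgue_measure (mulc_measurable c).
pose mu := mscale (NngNum (ltW c0)) pf.
have := @lebesgue_measure_unique R mu _ A mA.
apply => X /ocitvP [->|[[a b] /= ab ->]].
  by rewrite !measure0.
rewrite /mu /mscale /= /pushforward.
have -> : (mulc c) @^-1` `]a, b]%classic = `](a / c), (b / c)]%classic.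
  apply/seteqP; split => x /=; rewrite !in_itv /= => /andP[h1 h2];
  apply/andP; split.
  - by rewrite ltr_pdivrMr.
  - by rewrite ler_pdivlMr.
  - by rewrite -ltr_pdivrMr.
  - by rewrite -ler_pdivlMr.
rewrite !lebesgue_measure_itv /= !lte_fin ab ltr_pM2r ?invr_gt0 // ab.
by rewrite -EFinM -!EFinB; congr (_%:E); field; rewrite gt_eqF.
Qed.

Lemma int_scale (k : R) (k0 : 0 < k) (h : R -> \bar R) (E : set R) :
  measurable E -> measurable_fun setT h -> (forall y, (0 <= h y)%E) ->
  (\int[lebesgue_measure]_(x in mulc k @^-1` E) h (x * k)%R)%E =
  ((k^-1)%:E * \int[lebesgue_measure]_(y in E) h y)%E.
Proof.
move=> mE mh h0.
have := @ge0_integral_pushforward _ _ _ _ R _ (mulc_measurable k) lebesgue_measure E h mE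
  (measurable_funS measurableT (@subsetT _ E) mh) _.
move=> /(_ (fun y _ => h0 y)) H.
transitivity (\int[lebesgue_measure]_(x in mulc k @^-1` E) (h \o mulc k) x)%E; first by [].
rewrite -H.
have k0' : 0 <= k^-1 by rewrite invr_ge0 ltW.
rewrite -(@ge0_integral_mscale _ _ _ lebesgue_measure _ mE (NngNum k0'))//; last first.
  exact: measurable_funS mh.
apply: (@eq_measure_integral _ _ _ _ _ (measure_function_pushforward__canonical__measure_function_Measure lebesgue_measure (mulc_measurable k))) => A mA _.
rewrite /pushforward /= /mscale /= (leb_scale _ k0 _ mA) muleA -EFinM mulVf ?gt_eqF// mul1e.
by [].
Qed.

Lemma dens_scale d (T : measurableType d) (P : probability T R) (Z : T -> R)
  (fZ g : R -> R) (c : R) : 0 < c -> measurable_fun setT Z ->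
  is_density P Z fZ -> is_density P (fun w => Z w / c) g ->
  ae_eq lebesgue_measure setT (EFin \o g) (fun y => (c * fZ (y * c))%:E).
Proof.
move=> c0 mZ [mfZ [fZ0 dZ]] [mg [g0 dg]].
have mfZc : measurable_fun setT (fun y : R => fZ (y * c)).
  by apply: measurableT_comp => //; exact: (mulc_measurable c).
apply: integral_ae_eq => //.
- apply/integrableP; split; first exact/measurable_EFinP.
  under eq_integral => x _ do rewrite gee0_abs ?lee_fin//.
  by rewrite -dg// preimage_setT probability_setT ltry.
- apply/measurable_EFinP; apply: measurable_funM => //; exact: measurable_cst.
move=> E _ mE.
rewrite -dg//.
under eq_integral => x _ do rewrite EFinM.
rewrite ge0_integralZl_EFin//; last 2 first.
- by apply/measurable_EFinP; apply: (measurable_funS measurableT) => //; exact: mfZc.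
- exact: ltW.
have ci0 : 0 < c^-1 by rewrite invr_gt0.
have := @int_scale _ ci0 (fun y => (fZ (y * c))%:E) E mE (proj2 (measurable_EFinP _ _) mfZc) (fun y => fZ0 _).
rewrite invrK => <-.
rewrite (_ : (fun w => Z w / c) @^-1` E = Z @^-1` (mulc c^-1 @^-1` E)); last first.
  by apply/seteqP; split => w /=.
rewrite dZ; last first.
  rewrite -[X in measurable X]setTI; apply: (mulc_measurable c^-1) => //.
apply: eq_integral => x _ /=.
rewrite /mulc -mulrA mulVf ?gt_eqF// mulr1.
  by [].
by move=> x _; rewrite lee_fin.
Qed.

Lemma went_scale d (T : measurableType d) (P : probability T R) (Z : T -> R)
  (fZ g phi : R -> R) (c : R) : 0 < c -> measurable_fun setT Z ->
  is_density P Z fZ -> is_density P (fun w => Z w / c) g ->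
  wadmissible P phi Z fZ ->
  wadmissible P (fun x => phi (x * c)) (fun w => Z w / c) g ->
  went P (fun x => phi (x * c)) (fun w => Z w / c) g
  = went P phi Z fZ - wexp P phi Z * ln c.
Proof.
move=> c0 mZ dZ dW [iphi ilogf] [_ ilogg].
have [N [mN N0 sN]] := @dens_scale _ _ P Z fZ g c c0 mZ dZ dW.
case: dZ => [mfZ [fZ0 dZ]]; case: dW => [mg [g0 dg]].
have mW : measurable_fun setT (fun w => Z w / c).
  by apply: measurable_funM => //; exact: measurable_cst.
pose Nf := fZ @^-1` [set 0].
have mNf : measurable Nf.
  by rewrite -[X in measurable X]setTI; apply: mfZ => //.
have PW : P ((fun w => Z w / c) @^-1` N) = 0%E.
  rewrite dg// null_set_integral//.
  apply/measurable_EFinP; exact: (measurable_funS measurableT).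
have PZ : P (Z @^-1` Nf) = 0%E.
  rewrite dZ// (eq_integral (fun _ => 0%E)); first by rewrite integral0.
  by move=> x; rewrite inE /Nf /= => ->.
have mWN : measurable ((fun w => Z w / c) @^-1` N).
  by rewrite -[X in measurable X]setTI; apply: mW.
have mZN : measurable (Z @^-1` Nf).
  by rewrite -[X in measurable X]setTI; apply: mZ.
have ae : ae_eq P setT
   (fun w => (phi ((Z w / c) * c) * ln (g (Z w / c)))%:E)
   (fun w => (phi (Z w) * ln c)%:E + (phi (Z w) * ln (fZ (Z w)))%:E)%E.
  exists ((fun w => Z w / c) @^-1` N `|` Z @^-1` Nf); split.
  - exact: measurableU.
  - exact: null_set_setU.
  move=> w /= /not_implyP [_ hw].
  apply: contrapT => /not_orP [hN hNf]; apply: hw.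
  have gw : g (Z w / c) = c * fZ (Z w).
    have : ~ (~` [set y | setT y -> (EFin \o g) y = (c * fZ (y * c))%:E]) (Z w / c).
      by move=> /sN.
    move=> /contrapT /(_ I) [->]; by rewrite -mulrA mulVf ?gt_eqF// mulr1.
  have fpos : 0 < fZ (Z w).
    by rewrite lt_neqAle fZ0 andbT eq_sym; apply/eqP => h; apply: hNf.
  rewrite -mulrA mulVf ?gt_eqF// mulr1 gw lnM ?posrE// -EFinD mulrDr.
  done.
rewrite /went /wexp unlock.
rewrite (ae_eq_integral _ _ _ _ _ ae)//; last 2 first.
- exact: measurable_int ilogg.
- apply: emeasurable_funD; last exact: measurable_int ilogf.
  apply/measurable_EFinP; apply: measurable_funM => //.
  by apply/measurable_EFinP; exact: measurable_int iphi.
rewrite integralD//; last first.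
  rewrite (_ : (fun x => _) = ((EFin \o (phi \o Z)) \* cst (ln c)%:E)%E); first exact: integrableZr.
  by apply/funext => x /=; rewrite EFinM.
rewrite (_ : (\int[P]_x (phi (Z x) * ln c)%:E)%E = (\int[P]_x ((EFin \o (phi \o Z)) x * (ln c)%:E))%E); last first.
  by apply: eq_integral => x _; rewrite EFinM.
rewrite integralZr//.
rewrite fineD; last 2 first.
- by rewrite fin_numM// integrable_fin_num.
- exact: integrable_fin_num.
rewrite fineM//; last exact: integrable_fin_num.
by rewrite opprD addrC.
Qed.
End S.

Theorem mainTheorem2 (R : realType) (d : measure_display) (T : measurableType d)
  (P : probability T R) (X1 X2 : T -> R) (f1 f2 f fY1 fY2 phi : R -> R) :
  measurable_fun setT X1 -> measurable_fun setT X2 ->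
  indep2 P X1 X2 ->
  is_density P X1 f1 -> is_density P X2 f2 ->
  measurable_fun setT phi -> (forall x, 0 <= phi x) ->
  (exists U : set R, open U /\ U !=set0 /\ forall x, U x -> 0 < phi x) ->
  let X := fun w => X1 w + X2 w in
  is_density P X f ->
  let kappa := expR (2 * went P phi X1 f1 / wexp P phi X1)
             + expR (2 * went P phi X2 f2 / wexp P phi X2) in
  let alpha := atan (expR (went P phi X2 f2 / wexp P phi X2
                           - went P phi X1 f1 / wexp P phi X1)) in
  let Y1 := fun w => X1 w / cos alpha in
  let Y2 := fun w => X2 w / sin alpha in
  let phic := fun x => phi (x * cos alpha) in
  let phis := fun x => phi (x * sin alpha) in
  is_density P Y1 fY1 -> is_density P Y2 fY2 ->
  wadmissible P phi X1 f1 -> wadmissible P phi X2 f2 -> wadmissible P phi X f ->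
  wadmissible P phic Y1 fY1 -> wadmissible P phis Y2 fY2 ->
  0 < wexp P phi X1 -> 0 < wexp P phi X2 -> 0 < wexp P phi X ->
  (* (i) *)
  (1 <= kappa -> wexp P phi X <= wexp P phi X1 /\ wexp P phi X <= wexp P phi X2) ->
  (kappa <= 1 -> wexp P phi X1 <= wexp P phi X /\ wexp P phi X2 <= wexp P phi X) ->
  (* (ii) weighted Lieb splitting inequality *)
  (cos alpha) ^+ 2 * went P phic Y1 fY1 + (sin alpha) ^+ 2 * went P phis Y2 fY2
    <= went P phi X f ->
  kappa <= expR (2 * went P phi X f / wexp P phi X).
Proof.
move=> mX1 mX2 _ d1 d2 mphi phi0 _ X dX kappa alpha Y1 Y2 phic phis dY1 dY2
  w1 w2 _ wc ws E1p E2p Ep hi1 hi2 hii.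
pose t := expR (went P phi X2 f2 / wexp P phi X2 - went P phi X1 f1 / wexp P phi X1).
have t0 : 0 < t by rewrite expR_gt0.
have hc : 0 < cos alpha.
  by apply: cos_gt0_pihalf; rewrite atan_gtNpi2 atan_ltpi2.
have hs : sin alpha = t * cos alpha.
  have : tan alpha = t by rewrite /alpha atanK.
  by rewrite /tan => <-; rewrite divfK ?gt_eqF.
have hs0 : 0 < sin alpha by rewrite hs mulr_gt0.
have hc2 : cos alpha ^+ 2 * (1 + t ^+ 2) = 1.
  rewrite /alpha cos_atan exprVn sqr_sqrtr ?mulVf//.
have hY1 := @went_scale _ _ _ P X1 f1 fY1 phi (cos alpha) hc mX1 d1 dY1 w1 wc.
have hY2 := @went_scale _ _ _ P X2 f2 fY2 phi (sin alpha) hs0 mX2 d2 dY2 w2 ws.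
rewrite -/Y1 -/Y2 -/phic -/phis in hY1 hY2.
rewrite hY1 hY2 in hii.
have lns : ln (sin alpha) = (went P phi X2 f2 / wexp P phi X2 - went P phi X1 f1 / wexp P phi X1) + ln (cos alpha).
  by rewrite hs lnM ?posrE// /t expRK.
rewrite lns in hii.
have kap : kappa = expR (2 * (went P phi X1 f1 / wexp P phi X1 - ln (cos alpha))).
  rewrite /kappa -!mulrA !expRM_natl expRB lnK ?posrE//.
  move: hc2; rewrite /t expRB.
  have u0 : expR (went P phi X1 f1 / wexp P phi X1) != 0 by rewrite gt_eqF// expR_gt0.
  have c0 : cos alpha != 0 by rewrite gt_eqF.
  move: u0 c0.
  set u := expR (went P phi X1 f1 / wexp P phi X1).
  set v := expR (went P phi X2 f2 / wexp P phi X2).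
  set c := cos alpha.
  move=> u0 c0 hc2.
  transitivity ((u/c)^+2 * (c^+2 * (1 + (v/u)^+2))); last by rewrite hc2 mulr1.
  clearbody u v c. field. by rewrite u0 c0.
have cs := cos2Dsin2 alpha.
move: hii hi1 hi2 cs.
rewrite kap -mulrA ler_expR ler_pM2l// ler_pdivlMr//.
set h1 := went P phi X1 f1; set h2 := went P phi X2 f2; set h := went P phi X f.
set E1 := wexp P phi X1; set E2 := wexp P phi X2; set E := wexp P phi X.
set c := cos alpha; set s := sin alpha.
move=> hii hi1 hi2 cs.
have h1E : h1 = h1 / E1 * E1 by rewrite divfK ?gt_eqF.
have h2E : h2 = h2 / E2 * E2 by rewrite divfK ?gt_eqF.
move: hii hi1 hi2 cs.
set a1 := h1 / E1; set a2 := h2 / E2.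
rewrite {1}h1E {1}h2E.
move=> hii hi1 hi2 cs.
set sig := a1 - ln c.
have eqW : c ^+ 2 * (a1 * E1 - E1 * ln c) + s ^+ 2 * (a2 * E2 - E2 * (a2 - a1 + ln c))
  = sig * (c ^+ 2 * E1 + s ^+ 2 * E2) by rewrite /sig; ring.
rewrite eqW in hii.
have [sig0|sig0] := leP 0 sig.
- have k1 : 1 <= expR (2 * sig).
    by apply: le_trans (expR_ge1Dx _); rewrite lerDl mulr_ge0.
  have [e1 e2] := hi1 k1.
  apply: le_trans hii; apply: ler_wpM2l => //.
  rewrite [leLHS](_ : E = c ^+ 2 * E + s ^+ 2 * E); last by rewrite -mulrDl cs mul1r.
  by rewrite lerD// ler_wpM2l// sqr_ge0.
- have k2 : expR (2 * sig) <= 1.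
    by rewrite expR_le1 pmulr_rle0// ltW.
  have [e1 e2] := hi2 k2.
  apply: le_trans hii; apply: ler_wnM2l; first exact: ltW.
  rewrite [leRHS](_ : E = c ^+ 2 * E + s ^+ 2 * E); last by rewrite -mulrDl cs mul1r.
  by rewrite lerD// ler_wpM2l// sqr_ge0.
Qed.
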